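(* Assume the target tube $\mathscr{T}_N$ is closed, $\mathcal{U}$ is compact, and each $f_k$ is continuous on $\mathcal{X}\times\mathcal{U}$. Let $\mathcal{E}\subseteq\mathcal{W}$ be a measurable set with $\mathbb{P}_w(w\in\mathcal{E})>0$, and let $\pi^\ast\in\mathcal{M}$ be the Markov policy built from Borel-measurable minimizers $\mu_k^\ast$ of the min-max recursion $J_N^\ast=g_N$, $J_k^\ast(x)=\inf_{u\in\mathcal{U}}\sup_{w\in\mathcal{E}}[J^\ast_{k+1}(f_k(x,u)+w)+g_k(x)]$, $g_k=1-\mathbf{1}_{\mathcal{T}_k}$. Then for every $k\in\mathbb{N}_{[0,N-1]}$ and every $y\in\mathcal{R}_k(\mathscr{T}_N,\mathcal{E})$, $$\mathbb{P}^{\pi^\ast}_{k}\Big(\bigcap_{t=k+1}^N\{x_t\in\mathcal{T}_t\}\ \Big|\ x_k=y,\ (w_k,\dots,w_{N-1})\in\mathcal{E}^{N-k}\Big)=1.$$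
   Context: Fix $N\in\mathbb{N}$, $N>0$, and write $\mathbb{N}_{[a,b]}=\{a,a+1,\dots,b\}$. Consider the discrete-time system $x_{k+1}=f_k(x_k,u_k)+w_k$, $k=0,\dots,N-1$, with state $x_k\in\mathcal{X}\subseteq\mathbb{R}^n$, input $u_k\in\mathcal{U}\subseteq\mathbb{R}^m$, disturbance $w_k\in\mathcal{W}\subseteq\mathbb{R}^n$ with $0\in\mathcal{W}$, and $f_k:\mathcal{X}\times\mathcal{U}\to\mathcal{X}$. A target tube is a sequence $\mathscr{T}_N=[\mathcal{T}_0,\dots,\mathcal{T}_N]$ of subsets of $\mathcal{X}$; it is called closed (resp. convex) if every $\mathcal{T}_k$ is closed (resp. convex). $\mathbf{1}_S$ denotes the indicator function of a set $S$. In the stochastic setting, $w_0,\dots,w_{N-1}$ are i.i.d. random vectors with an absolutely continuous distribution $\mathbb{P}_w$ on $\mathcal{W}$. A Markov policy is a tuple $\pi=[\mu_0,\dots,\mu_{N-1}]$ of universally measurable maps $\mu_k:\mathcal{X}\to\mathcal{U}$; $\mathcal{M}$ denotes the set of Markov policies. For $\pi\in\mathcal{M}$ and $x_k=y$, $\mathbb{P}^\pi_k(\cdot\,|\,y)$ denotes the probability law of $(x_{k+1},\dots,x_N)$ generated by $x_{t+1}=f_t(x_t,\mu_t(x_t))+w_t$. For $\mathcal{E}\subseteq\mathcal{W}$ and $k\in\mathbb{N}_{[0,N-1]}$, the disturbance minimal reach set $\mathcal{R}_k(\mathscr{T}_N,\mathcal{E})$ is the set of $x_k\in\mathcal{T}_k$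 for which there exist state-feedback laws $\nu_t:\mathcal{X}\to\mathcal{U}$, $t\in\mathbb{N}_{[k,N-1]}$ (no measurability required), such that for every disturbance sequence $w_k,\dots,w_{N-1}\in\mathcal{E}$ the trajectory $x_{t+1}=f_t(x_t,\nu_t(x_t))+w_t$ satisfies $x_t\in\mathcal{T}_t$ for all $t\in\mathbb{N}_{[k+1,N]}$; also $\mathcal{R}_N(\mathscr{T}_N,\mathcal{E})=\mathcal{T}_N$. *)

(* Defs.v *)
From HB Require Import structures.
From mathcomp Require Import all_boot all_order all_algebra.
From mathcomp Require Import all_classical all_reals all_analysis.
Set Implicit Arguments. Unset Strict Implicit. Unset Printing Implicit Defensive.
Import Order.TTheory GRing.Theory Num.Theory.
Import numFieldNormedType.Exports.
Local Open Scope classical_set_scope.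
Local Open Scope ring_scope.

(* R^n is represented by row vectors 'rV[R]_n, with the (product/normed)
   topology of matrix_normedtype. *)

Definition Bvec (R : realType) (n : nat) := g_sigma_algebraType (@open 'rV[R]_n).

Definition borel_set (R : realType) (n : nat) (A : set 'rV[R]_n) : Prop :=
  @measurable _ (Bvec R n) A.

Definition borel_fun (R : realType) (n m : nat) (h : 'rV[R]_n -> 'rV[R]_m) : Prop :=
  @measurable_fun _ _ (Bvec R n) (Bvec R m) setT h.

Definition random_vector (R : realType) (d : measure_display) (Om : measurableType d)
  (n : nat) (X : Om -> 'rV[R]_n) : Prop :=
  @measurable_fun _ _ Om (Bvec R n) setT X.

Definition box (R : realType) (n : nat) (a b : 'rV[R]_n) : set 'rV[R]_n :=
  [set x | forall i, a 0 i <= x 0 i <= b 0 i].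

Definition box_vol (R : realType) (n : nat) (a b : 'rV[R]_n) : R :=
  \prod_(i < n) (b 0 i - a 0 i).

Definition lebesgue_null (R : realType) (n : nat) (A : set 'rV[R]_n) : Prop :=
  forall eps : R, 0 < eps ->
    exists a b : nat -> 'rV[R]_n,
      (forall j i, a j 0 i <= b j 0 i) /\
      A `<=` \bigcup_j box (a j) (b j) /\
      (\sum_(0 <= j <oo) (box_vol (a j) (b j))%:E < eps%:E)%E.

Definition abs_continuous (R : realType) (n : nat) (Pw : probability (Bvec R n) R) : Prop :=
  forall A : set 'rV[R]_n, borel_set A -> lebesgue_null A -> Pw A = 0%E.

Definition iid_disturbances (R : realType) (d : measure_display) (Om : measurableType d)
  (P : probability Om R) (n N : nat) (w : nat -> Om -> 'rV[R]_n)
  (Pw : probability (Bvec R n) R) : Prop :=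
  (forall t, (t < N)%N -> random_vector (w t)) /\
  (forall t (A : set 'rV[R]_n), (t < N)%N -> borel_set A -> P (w t @^-1` A) = Pw A) /\
  (forall (s : seq nat) (A : nat -> set 'rV[R]_n),
      uniq s -> all (fun t => t < N)%N s -> (forall t, borel_set (A t)) ->
      P (\big[setI/setT]_(t <- s) (w t @^-1` A t)) =
        (\prod_(t <- s) P (w t @^-1` A t))%E).

(* closed-loop trajectory: state at time k + j, starting from x_k = y, under
   feedback laws mu_t and disturbance sequence ws *)
Fixpoint traj (R : realType) (n m : nat)
  (f : nat -> 'rV[R]_n -> 'rV[R]_m -> 'rV[R]_n) (mu : nat -> 'rV[R]_n -> 'rV[R]_m)
  (k : nat) (y : 'rV[R]_n) (ws : nat -> 'rV[R]_n) (j : nat) : 'rV[R]_n :=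
  match j with
  | 0 => y
  | j'.+1 => let x := traj f mu k y ws j' in
             f (k + j')%N x (mu (k + j')%N x) + ws (k + j')%N
  end.

Definition reach_set (R : realType) (n m : nat) (X : set 'rV[R]_n) (U : set 'rV[R]_m)
  (f : nat -> 'rV[R]_n -> 'rV[R]_m -> 'rV[R]_n) (N : nat) (T : nat -> set 'rV[R]_n)
  (E : set 'rV[R]_n) (k : nat) : set 'rV[R]_n :=
  if (k < N)%N then
    [set y | T k y /\
      exists nu : nat -> 'rV[R]_n -> 'rV[R]_m,
        (forall t x, X x -> U (nu t x)) /\
        forall ws : nat -> 'rV[R]_n, (forall t, (k <= t < N)%N -> E (ws t)) ->
          forall t, (k < t <= N)%N -> T t (traj f nu k y ws (t - k))]
  else T N.

Definition stage_cost (R : realType) (n : nat) (T : nat -> set 'rV[R]_n) (k : nat)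
  (x : 'rV[R]_n) : R := 1 - \1_(T k) x.

(* min-max recursion, indexed by the number j of remaining steps (k = N - j) *)
Fixpoint Jrev (R : realType) (n m : nat) (U : set 'rV[R]_m)
  (f : nat -> 'rV[R]_n -> 'rV[R]_m -> 'rV[R]_n) (N : nat) (T : nat -> set 'rV[R]_n)
  (E : set 'rV[R]_n) (j : nat) (x : 'rV[R]_n) : \bar R :=
  match j with
  | 0 => (stage_cost T N x)%:E
  | j'.+1 =>
      ereal_inf [set ereal_sup
                   [set (Jrev U f N T E j' (f (N - j)%N x u + w) + (stage_cost T (N - j)%N x)%:E)%E
                   | w in E]
                | u in U]
  end.

Definition Jstar (R : realType) (n m : nat) (U : set 'rV[R]_m)
  (f : nat -> 'rV[R]_n -> 'rV[R]_m -> 'rV[R]_n) (N : nat) (T : nat -> set 'rV[R]_n)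
  (E : set 'rV[R]_n) (k : nat) : 'rV[R]_n -> \bar R :=
  Jrev U f N T E (N - k).

Definition cond_prob (R : realType) (d : measure_display) (Om : measurableType d)
  (P : probability Om R) (A B : set Om) : R :=
  fine (P (A `&` B)) / fine (P B).

(* Main.v *)
Require Import Defs.
From HB Require Import structures.
From mathcomp Require Import all_boot all_order all_algebra.
From mathcomp Require Import all_classical all_reals all_analysis.
From mathcomp Require Import zify.
Import Order.TTheory GRing.Theory Num.Theory.
Import numFieldNormedType.Exports.
Local Open Scope classical_set_scope.
Local Open Scope ring_scope.

Lemma stage_cost_ge0 (R : realType) (n : nat) (T : nat -> set 'rV[R]_n) k x :
  0 <= stage_cost T k x.
Proof. by rewrite /stage_cost indicE; case: (x \in T k); rewrite ?subrr ?subr0. Qed.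

Lemma stage_cost_T (R : realType) (n : nat) (T : nat -> set 'rV[R]_n) k x :
  T k x -> stage_cost T k x = 0.
Proof. move=> h; rewrite /stage_cost indicE.
have -> : x \in T k by rewrite in_setE.
by rewrite subrr. Qed.

Lemma stage_cost_le0 (R : realType) (n : nat) (T : nat -> set 'rV[R]_n) k x :
  stage_cost T k x <= 0 -> T k x.
Proof.
rewrite /stage_cost indicE; case: (boolP (x \in T k)); first by rewrite in_setE.
by move=> _; rewrite subr0 ler10.
Qed.

Lemma Jrev_ge0 (R : realType) (n m : nat) (U : set 'rV[R]_m)
  (f : nat -> 'rV[R]_n -> 'rV[R]_m -> 'rV[R]_n) (N : nat) (T : nat -> set 'rV[R]_n)
  (E : set 'rV[R]_n) : E !=set0 -> forall j x, (0 <= Jrev U f N T E j x)%E.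
Proof.
move=> [w0 Ew0]; elim=> [|j IH] x /=; first by rewrite lee_fin stage_cost_ge0.
apply: le_ereal_inf_tmp => _ [u Uu <-].
apply: le_trans (ereal_sup_ubound _); last by exists w0.
by apply: adde_ge0 => //; rewrite lee_fin stage_cost_ge0.
Qed.

Lemma Jstar_S (R : realType) (n m : nat) (U : set 'rV[R]_m)
  (f : nat -> 'rV[R]_n -> 'rV[R]_m -> 'rV[R]_n) (N : nat) (T : nat -> set 'rV[R]_n)
  (E : set 'rV[R]_n) k x : (k < N)%N ->
  Jstar U f N T E k x = ereal_inf [set ereal_sup
      [set (Jstar U f N T E k.+1 (f k x u + w) + (stage_cost T k x)%:E)%E | w in E] | u in U].
Proof.
move=> kN; rewrite /Jstar.
have -> : (N - k = (N - k.+1).+1)%N by lia.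
rewrite /=.
have -> : (N - (N - k.+1).+1 = k)%N by lia.
by [].
Qed.

Lemma Jstar_N (R : realType) (n m : nat) (U : set 'rV[R]_m)
  (f : nat -> 'rV[R]_n -> 'rV[R]_m -> 'rV[R]_n) (N : nat) (T : nat -> set 'rV[R]_n)
  (E : set 'rV[R]_n) x : Jstar U f N T E N x = (stage_cost T N x)%:E.
Proof. by rewrite /Jstar subnn. Qed.

Lemma traj_shift (R : realType) (n m : nat)
  (f : nat -> 'rV[R]_n -> 'rV[R]_m -> 'rV[R]_n) (mu : nat -> 'rV[R]_n -> 'rV[R]_m)
  k y (ws ws' : nat -> 'rV[R]_n) :
  (forall t, (k < t)%N -> ws t = ws' t) ->
  forall j, traj f mu k y ws j.+1 = traj f mu k.+1 (f k y (mu k y) + ws k) ws' j.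
Proof.
move=> hw; elim=> [|j IH]; first by rewrite /= addn0.
have -> : traj f mu k y ws j.+2 = f (k + j.+1)%N (traj f mu k y ws j.+1)
   (mu (k + j.+1)%N (traj f mu k y ws j.+1)) + ws (k + j.+1)%N by [].
rewrite IH (hw (k + j.+1)%N); last by lia.
have -> : (k + j.+1 = k.+1 + j)%N by lia.
by [].
Qed.

Lemma reach_J (R : realType) (n m : nat) (X : set 'rV[R]_n) (U : set 'rV[R]_m)
  (f : nat -> 'rV[R]_n -> 'rV[R]_m -> 'rV[R]_n) (N : nat) (T : nat -> set 'rV[R]_n)
  (E : set 'rV[R]_n) :
  (forall k, (k <= N)%N -> T k `<=` X) ->
  forall j k, (N - k = j)%N -> (k <= N)%N -> forall y,
  reach_set X U f N T E k y -> (Jstar U f N T E k y <= 0)%E.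
Proof.
move=> TX; elim=> [|j IH] k hj kN y.
  have -> : k = N by lia.
  rewrite /reach_set ltnn => Ty.
  by rewrite Jstar_N stage_cost_T.
have kN' : (k < N)%N by lia.
rewrite /reach_set kN' => -[Tky [nu [hnu hT]]].
rewrite Jstar_S //.
apply: le_trans (ereal_inf_lbound _) _.
  by exists (nu k y) => //; apply: hnu; apply: (TX k) => //; lia.
apply: ge_ereal_sup => _ [v Ev <-].
rewrite stage_cost_T // adde0.
apply: (IH k.+1); [lia | lia |].
have Tnext : T k.+1 (f k y (nu k y) + v).
  have := hT (fun _ => v) (fun _ _ => Ev) k.+1 _.
  rewrite subSnn /= addn0; apply; lia.
rewrite /reach_set; case: ifP => hk; last first.
  by have -> : N = k.+1 by lia.
split => //; exists nu; split => // ws' hws' t ht.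
pose ws := fun t => if t == k then v else ws' t.
have := hT ws _ t _.
have -> : (t - k = (t - k.+1).+1)%N by lia.
rewrite (@traj_shift _ _ _ _ _ _ _ _ ws'); last first.
  by move=> s ks; rewrite /ws; case: eqP => // ?; lia.
rewrite /ws eqxx; apply.
  by move=> s hs; rewrite /ws; case: eqP => // ?; apply: hws'; lia.
lia.
Qed.

Lemma J_step (R : realType) (n m : nat) (X : set 'rV[R]_n) (U : set 'rV[R]_m) (W : set 'rV[R]_n)
  (f : nat -> 'rV[R]_n -> 'rV[R]_m -> 'rV[R]_n) (N : nat) (T : nat -> set 'rV[R]_n)
  (E : set 'rV[R]_n) (mu : nat -> 'rV[R]_n -> 'rV[R]_m) :
  E !=set0 ->
  (forall k x u v, X x -> U u -> W v -> X (f k x u + v)) ->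
  E `<=` W ->
  (forall k x, (k < N)%N -> X x ->
     U (mu k x) /\
     Jstar U f N T E k x =
       ereal_sup [set (Jstar U f N T E k.+1 (f k x (mu k x) + v) + (stage_cost T k x)%:E)%E
                 | v in E]) ->
  forall k x, (k < N)%N -> X x -> (Jstar U f N T E k x <= 0)%E ->
  T k x /\ forall v, E v -> X (f k x (mu k x) + v) /\
     (Jstar U f N T E k.+1 (f k x (mu k x) + v) <= 0)%E.
Proof.
move=> [w0 Ew0] hX EW hmu k x kN Xx.
have [Umu ->] := hmu k x kN Xx => hle.
have elt : forall v, E v ->
    (Jstar U f N T E k.+1 (f k x (mu k x) + v) + (stage_cost T k x)%:E <= 0)%E.
  move=> v Ev; apply: le_trans hle; apply: ereal_sup_ubound; by exists v.
have J0 : forall z, (0 <= Jstar U f N T E k.+1 z)%E.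
  by move=> z; apply: Jrev_ge0; exists w0.
split.
  apply: stage_cost_le0; rewrite -lee_fin.
  apply: le_trans (elt _ Ew0); apply: leeDr; exact: J0.
move=> v Ev; split; first by apply: hX => //; apply: EW.
apply: le_trans (elt _ Ev); apply: leeDl; rewrite lee_fin; exact: stage_cost_ge0.
Qed.

Lemma traj_safe (R : realType) (n m : nat) (X : set 'rV[R]_n) (U : set 'rV[R]_m) (W : set 'rV[R]_n)
  (f : nat -> 'rV[R]_n -> 'rV[R]_m -> 'rV[R]_n) (N : nat) (T : nat -> set 'rV[R]_n)
  (E : set 'rV[R]_n) (mu : nat -> 'rV[R]_n -> 'rV[R]_m) :
  E !=set0 ->
  (forall k x u v, X x -> U u -> W v -> X (f k x u + v)) ->
  (forall k, (k <= N)%N -> T k `<=` X) ->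
  E `<=` W ->
  (forall k x, (k < N)%N -> X x ->
     U (mu k x) /\
     Jstar U f N T E k x =
       ereal_sup [set (Jstar U f N T E k.+1 (f k x (mu k x) + v) + (stage_cost T k x)%:E)%E
                 | v in E]) ->
  forall k, (k < N)%N ->
  forall y, reach_set X U f N T E k y ->
  forall ws : nat -> 'rV[R]_n, (forall t, (k <= t < N)%N -> E (ws t)) ->
  forall t, (k < t <= N)%N -> T t (traj f mu k y ws (t - k)).
Proof.
move=> E0 hX TX EW hmu k kN y hy ws hws.
have inv : forall j, (k + j <= N)%N ->
    X (traj f mu k y ws j) /\ (Jstar U f N T E (k + j) (traj f mu k y ws j) <= 0)%E.
  elim=> [|j IH] hj.
    rewrite addn0 /=; split.
      apply: (TX k); first lia.
      by move: hy; rewrite /reach_set kN => -[].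
    by apply: (@reach_J _ _ _ X U f N T E TX (N - k)%N k erefl) => //; lia.
  have [Xx Jx] := IH ltac:(lia).
  have [_ h] := @J_step _ _ _ X U W f N T E mu E0 hX EW hmu (k + j)%N _ ltac:(lia) Xx Jx.
  have [hX' hJ'] := h (ws (k + j)%N) (hws (k + j)%N ltac:(lia)).
  by rewrite addnS.
move=> t ht.
have [Xx Jx] := inv (t - k)%N ltac:(lia).
have ekt : (k + (t - k) = t)%N by lia.
rewrite ekt in Jx.
case: (ltnP t N) => htN.
  by have [] := @J_step _ _ _ X U W f N T E mu E0 hX EW hmu t _ htN Xx Jx.
have etN : t = N by lia.
subst t; move: Jx; rewrite Jstar_N lee_fin; exact: stage_cost_le0.
Qed.

Lemma prod_pos (R : realType) (s : seq nat) (F : nat -> \bar R) :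
  (forall t, t \in s -> exists r, 0 < r /\ F t = r%:E) ->
  exists r, 0 < r /\ (\prod_(t <- s) F t)%E = r%:E.
Proof.
elim: s => [|a s IH] h; first by exists 1; rewrite big_nil.
have [r [r0 hr]] := h a (mem_head _ _).
have [r' [r0' hr']] := IH (fun t ht => h t (mem_behead (s:=a :: s) ht)).
by exists (r * r'); rewrite big_cons hr hr' -EFinM mulr_gt0.
Qed.

Lemma big_setI_seq (T : Type) (s : seq nat) (F : nat -> set T) om :
  (\big[setI/setT]_(t <- s) F t) om <-> forall t, t \in s -> F t om.
Proof.
elim: s => [|a s IH]; first by rewrite big_nil; split.
rewrite big_cons; split.
  move=> [Fa Fs] t; rewrite inE => /orP[/eqP -> //|ts].
  by apply IH.
move=> h; split; first by apply: h; rewrite mem_head.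
by apply/IH => t ts; apply: h; rewrite inE ts orbT.
Qed.

Theorem proposition1
  (R : realType) (n m N : nat)
  (X : set 'rV[R]_n) (U : set 'rV[R]_m) (W : set 'rV[R]_n)
  (f : nat -> 'rV[R]_n -> 'rV[R]_m -> 'rV[R]_n)
  (T : nat -> set 'rV[R]_n)
  (d : measure_display) (Om : measurableType d) (P : probability Om R)
  (w : nat -> Om -> 'rV[R]_n) (Pw : probability (Bvec R n) R)
  (E : set 'rV[R]_n) (mu : nat -> 'rV[R]_n -> 'rV[R]_m) :
  (0 < N)%N ->
  (* standing assumptions on the system *)
  W 0 ->
  (forall k x u, X x -> U u -> X (f k x u)) ->
  (forall k x u v, X x -> U u -> W v -> X (f k x u + v)) ->
  (forall k, (k <= N)%N -> T k `<=` X) ->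
  (* i.i.d. absolutely continuous disturbances with law Pw on W *)
  borel_set W -> Pw W = 1%E -> abs_continuous Pw ->
  iid_disturbances P N w Pw ->
  (* hypotheses of the proposition *)
  (forall k, (k <= N)%N -> closed (T k)) ->
  compact U ->
  (forall k, (k < N)%N -> {within X `*` U, continuous (fun p => f k p.1 p.2)}) ->
  E `<=` W -> borel_set E -> (0 < Pw E)%E ->
  (* pi* = [mu_0, ..., mu_{N-1}] : Borel-measurable minimizers of the min-max recursion *)
  (forall k, (k < N)%N -> borel_fun (mu k)) ->
  (forall k x, (k < N)%N -> X x ->
     U (mu k x) /\
     Jstar U f N T E k x =
       ereal_sup [set (Jstar U f N T E k.+1 (f k x (mu k x) + v) + (stage_cost T k x)%:E)%E
                 | v in E]) ->
  forall k, (k < N)%N ->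
  forall y, reach_set X U f N T E k y ->
  cond_prob P
    [set om | forall t, (k < t <= N)%N -> T t (traj f mu k y (fun s => w s om) (t - k))]
    [set om | forall t, (k <= t < N)%N -> E (w t om)]
  = 1.
Proof.
move=> N0 W0 _ hX TX _ _ _ [_ [hPw hind]] _ _ _ EW hE PE _ hmu k kN y hy.
have E0 : E !=set0.
  apply/set0P; apply/negP => /eqP E0; move: PE; rewrite E0 measure0 ltxx.
  by [].
rewrite /cond_prob setIidr; last first.
  move=> om hom; apply: (@traj_safe _ _ _ X U W f N T E mu E0 hX TX EW hmu k kN y hy).
  exact: hom.
have [r0 [r0pos hr0]] : exists r, 0 < r /\ Pw E = r%:E.
  move: PE (probability_le1 Pw hE); case: (Pw E) => [r| |] //.
  by rewrite lte_fin => r0 _; exists r.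
have eqB : [set om | forall t, (k <= t < N)%N -> E (w t om)] =
    \big[setI/setT]_(t <- iota k (N - k)) (w t @^-1` E).
  apply/seteqP; split => om /=.
    move=> h; apply/big_setI_seq => t; rewrite mem_iota => ht; apply: h; lia.
  move=> /big_setI_seq h t ht; apply: h; rewrite mem_iota; lia.
rewrite eqB hind; last by [].
- have [r [rpos ->]] : exists r, 0 < r /\
      (\prod_(t <- iota k (N - k)) P (w t @^-1` E))%E = r%:E.
    apply: prod_pos => t; rewrite mem_iota => ht.
    by exists r0; rewrite hPw //; lia.
  by rewrite /= divff // gt_eqF.
- exact: iota_uniq.
- by apply/allP => t; rewrite mem_iota => ht; lia.
Qed.
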